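(* For all integers $m$ and $n$, \[ \sum_{k = (1+(-1)^n)/2}^n ( - 1)^{k - 1} L_{mk}^{\,4} = \frac{( - 1)^{n - 1}\,5F_{mn} F_{mn + m} \left\{ L_m L_{mn} L_{mn + m} + ( - 1)^{nm}4L_{2m} \right\}}{L_m L_{2m}}\,. \] (Here the summation starts at $k=1$ if $n$ is even and at $k=0$ if $n$ is odd.)
   Context: $F_i$ and $L_i$ denote the Fibonacci and Lucas numbers, defined for all $i\in\mathbb{Z}$ by $F_i=F_{i-1}+F_{i-2}$, $F_0=0$, $F_1=1$, and $L_i=L_{i-1}+L_{i-2}$, $L_0=2$, $L_1=1$; equivalently $F_{-i}=(-1)^{i-1}F_i$ and $L_{-i}=(-1)^iL_i$. Summation convention for an arbitrary integer upper limit: $\sum_{k=a}^{a-1} f(k)=0$, and for $n<a-1$, $\sum_{k=a}^{n} f(k) = -\sum_{k=n+1}^{a-1} f(k)$. *)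

(* Defs.v *)
From mathcomp Require Import all_boot all_order all_algebra.
Set Implicit Arguments. Unset Strict Implicit. Unset Printing Implicit Defensive.
Import Order.TTheory GRing.Theory Num.Theory.
Local Open Scope ring_scope.

Fixpoint fib_pair (n : nat) : int * int :=
  match n with
  | 0%N => (0, 1)
  | n'.+1 => let p := fib_pair n' in (p.2, p.1 + p.2)
  end.
Fixpoint luc_pair (n : nat) : int * int :=
  match n with
  | 0%N => (2, 1)
  | n'.+1 => let p := luc_pair n' in (p.2, p.1 + p.2)
  end.
Definition fibn (n : nat) : int := (fib_pair n).1.
Definition lucn (n : nat) : int := (luc_pair n).1.

(* Extension to all integers: F_{-i} = (-1)^(i-1) F_i, L_{-i} = (-1)^i L_i.
   Negz n denotes -(n+1). *)
Definition F (i : int) : int :=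
  match i with
  | Posz n => fibn n
  | Negz n => (-1) ^+ n * fibn n.+1
  end.
Definition L (i : int) : int :=
  match i with
  | Posz n => lucn n
  | Negz n => (-1) ^+ n.+1 * lucn n.+1
  end.

(* Summation with arbitrary integer bounds:
   sumZ a n f = sum_{k=a}^{n} f k, with sum_{k=a}^{a-1} = 0 and
   sum_{k=a}^{n} = - sum_{k=n+1}^{a-1} for n < a - 1. *)
Definition sumZ (R : zmodType) (a n : int) (f : int -> R) : R :=
  if (a <= n + 1)%R then \sum_(0 <= j < absz (n - a + 1)%R) f (a + j%:Z)%R
  else - \sum_(0 <= j < absz (a - 1 - n)%R) f (n + 1 + j%:Z)%R.

(* lower limit (1 + (-1)^n)/2 : 1 if n even, 0 if n odd *)
Definition low (n : int) : int := if (2 %| n)%Z then 1 else 0.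

(* Main.v *)
Require Import Defs.
From mathcomp Require Import all_boot all_order all_algebra.
From mathcomp Require Import ring lra zify.
Import Order.TTheory GRing.Theory Num.Theory.
Local Open Scope ring_scope.

Lemma fibn_rec n : fibn n.+2 = fibn n.+1 + fibn n.
Proof. by rewrite /fibn /= addrC. Qed.
Lemma lucn_rec n : lucn n.+2 = lucn n.+1 + lucn n.
Proof. by rewrite /lucn /= addrC. Qed.

Lemma sgn2 (R : pzRingType) n : (-1 : R) ^+ n * (-1) ^+ n = 1.
Proof. by rewrite -exprD addnn -mul2n exprM sqrrN !expr1n. Qed.

Lemma F_rec i : F (i + 2) = F (i + 1) + F i.
Proof.
case: i => [n|[|[|k]]].
- by rewrite -!PoszD addn2 addn1 /= fibn_rec.
- by [].
- by [].
- have -> : Negz k.+2 + 2 = Negz k by lia.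
  have -> : Negz k.+2 + 1 = Negz k.+1 by lia.
  rewrite /= !fibn_rec !exprS. ring.
Qed.

Lemma L_rec i : L (i + 2) = L (i + 1) + L i.
Proof.
case: i => [n|[|[|k]]].
- by rewrite -!PoszD addn2 addn1 /= lucn_rec.
- by [].
- by [].
- have -> : Negz k.+2 + 2 = Negz k by lia.
  have -> : Negz k.+2 + 1 = Negz k.+1 by lia.
  rewrite /= !lucn_rec !exprS. ring.
Qed.

Lemma int_ind2 (P : int -> Prop) : P 0 -> P 1 ->
  (forall i, P i -> P (i + 1) -> P (i + 2)) ->
  (forall i, P (i + 1) -> P (i + 2) -> P i) -> forall i, P i.
Proof.
move=> P0 P1 Hu Hd.
have Hp : forall n : nat, P n%:Z /\ P (n%:Z + 1).
  elim=> [|n [IH1 IH2]]; first by split.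
  split; first by rewrite -[n.+1]addn1 PoszD.
  have -> : n.+1%:Z + 1 = n%:Z + 2 by lia.
  exact: Hu.
have Hn : forall n : nat, P (- n%:Z) /\ P (- n%:Z + 1).
  elim=> [|n [IH1 IH2]]; first by split.
  split; last by have -> : - (n.+1%:Z) + 1 = - n%:Z by lia.
  apply: Hd; first by have -> : - (n.+1%:Z) + 1 = - n%:Z by lia.
  by have -> : - (n.+1%:Z) + 2 = - n%:Z + 1 by lia.
case=> n; first by case: (Hp n).
by rewrite NegzE; case: (Hn n.+1).
Qed.

Lemma int_ind1 (P : int -> Prop) : P 0 ->
  (forall i, P i -> P (i + 1)) ->
  (forall i, P (i + 1) -> P i) -> forall i, P i.
Proof.
move=> P0 Hu Hd.
have Hp : forall n : nat, P n.
  elim=> [|n IH] //. by rewrite -[n.+1]addn1 PoszD; apply: Hu.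
have Hn : forall n : nat, P (- n%:Z).
  elim=> [|n IH] //. apply: Hd. by have -> : - (n.+1%:Z) + 1 = - n%:Z by lia.
case=> n; first exact: Hp.
by rewrite NegzE.
Qed.

Lemma i11 : (1 : int) + 1 = 2. Proof. by []. Qed.
Lemma i12 : (1 : int) + 2 = 3. Proof. by []. Qed.
Lemma i21 : (2 : int) + 1 = 3. Proof. by []. Qed.
Lemma i22 : (2 : int) + 2 = 4. Proof. by []. Qed.
Ltac norm := rewrite -?addrA ?i11 ?i12 ?i21 ?i22.
Ltac st t := try (let x := fresh "x" in set x := t).
Ltac atoms i :=
  st (F (i + 3)); st (F (i + 2)); st (F (i + 1)); st (F (i + 4));
  st (L (i + 3)); st (L (i + 2)); st (L (i + 1)); st (L (i + 4));
  st (F i); st (L i).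
Ltac atoms2 a i :=
  st (F (a + (i + 3))); st (F (a + (i + 2))); st (F (a + (i + 1)));
  st (L (a + (i + 3))); st (L (a + (i + 2))); st (L (a + (i + 1)));
  st (F (a + i)); st (L (a + i)).

Lemma LF1 i : L i = 2 * F (i + 1) - F i.
Proof.
elim/int_ind2: i => [| |i h1 h2|i h1 h2] //;
  move: h1 h2 (F_rec (i + 1)) (F_rec i) (L_rec i); norm; atoms i; lia.
Qed.

Lemma LF2 i : 2 * L (i + 1) = L i + 5 * F i.
Proof.
elim/int_ind2: i => [| |i h1 h2|i h1 h2] //;
  move: h1 h2 (F_rec (i + 1)) (F_rec i) (L_rec i) (L_rec (i + 1)); norm; atoms i; lia.
Qed.

Lemma F0 : F 0 = 0. Proof. by []. Qed.
Lemma L0 : L 0 = 2. Proof. by []. Qed.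
Lemma F1 : F 1 = 1. Proof. by []. Qed.
Lemma L1 : L 1 = 1. Proof. by []. Qed.

Lemma addF a b : 2 * F (a + b) = F a * L b + F b * L a /\
                 2 * L (a + b) = L a * L b + 5 * F a * F b.
Proof.
elim/int_ind2: b => [| |i [h1 h1'] [h2 h2']|i [h1 h1'] [h2 h2']].
- rewrite addr0 F0 L0. split; ring.
- rewrite F1 L1 !mulr1 !mul1r. move: (LF1 a) (LF2 a). atoms a. lia.
- move: h1 h1' h2 h2' (F_rec (a + i)) (L_rec (a + i)) (F_rec i) (L_rec i); norm; atoms2 a i; atoms i; st (F a); st (L a); nia.
- move: h1 h1' h2 h2' (F_rec (a + i)) (L_rec (a + i)) (F_rec i) (L_rec i); norm; atoms2 a i; atoms i; st (F a); st (L a); nia.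
Qed.

Lemma Fneg a : F (- a) = - (-1) ^+ `|a|%N * F a.
Proof.
case: a => [[|n]|n].
- by [].
- have -> : - Posz n.+1 = Negz n by rewrite NegzE.
  rewrite /= exprS. ring.
- have -> : - Negz n = Posz n.+1 by rewrite NegzE opprK.
  by rewrite /= exprS mulN1r opprK mulrA sgn2 mul1r.
Qed.

Lemma Lneg a : L (- a) = (-1) ^+ `|a|%N * L a.
Proof.
case: a => [[|n]|n].
- by [].
- have -> : - Posz n.+1 = Negz n by rewrite NegzE.
  by [].
- have -> : - Negz n = Posz n.+1 by rewrite NegzE opprK.
  by rewrite /= mulrA sgn2 mul1r.
Qed.

Lemma cass a : L a ^+ 2 - 5 * F a ^+ 2 = 4 * (-1) ^+ `|a|%N.
Proof.
have [_ h] := addF a (- a).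
rewrite addrN L0 Fneg Lneg in h.
set s := (-1) ^+ `|a|%N in h *.
have s2 : s * s = 1 by rewrite sgn2.
have h' : s * (L a ^+ 2 - 5 * F a ^+ 2) = 2 * 2 by rewrite h; ring.
transitivity (s * (s * (L a ^+ 2 - 5 * F a ^+ 2))); first by rewrite mulrA s2 mul1r.
rewrite h'. ring.
Qed.

Lemma lucn_pos n : 0 < lucn n /\ 0 < lucn n.+1.
Proof.
elim: n => [|n [h1 h2]]; first by [].
split=> //. rewrite lucn_rec. lia.
Qed.

Lemma L_neq0 i : L i != 0.
Proof.
case: i => n /=.
- by case: (lucn_pos n) => h _; rewrite gt_eqF.
- rewrite mulf_neq0 ?signr_eq0 //.
  by case: (lucn_pos n) => _ h; rewrite gt_eqF.
Qed.

Lemma sgz (k : int) : (-1 : rat) ^ k = (-1) ^+ `|k|%N.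
Proof. by case: k => n //=; rewrite NegzE -exprnN invr_sign. Qed.

Lemma sgD (i j : int) : (-1 : rat) ^ (i + j) = (-1) ^ i * (-1) ^ j.
Proof. by rewrite expfzDr // oppr_eq0 oner_eq0. Qed.

Lemma sgsq (i : int) : (-1 : rat) ^ i * (-1) ^ i = 1.
Proof. by rewrite sgz sgn2. Qed.

Lemma sgm1 : (-1 : rat) ^ (-1 : int) = -1.
Proof. by rewrite sgz. Qed.
Lemma sg1 : (-1 : rat) ^ (1 : int) = -1.
Proof. by rewrite sgz. Qed.

Lemma sg_dvd n : (-1 : rat) ^ n = if (2 %| n)%Z then 1 else -1.
Proof. by rewrite sgz dvdzE -signr_odd dvdn2; case: odd. Qed.

Lemma cassQ a : ((L a)%:~R : rat) ^+ 2 - 5 * (F a)%:~R ^+ 2 = 4 * (-1) ^ a.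
Proof.
have := congr1 (fun z : int => z%:~R : rat) (cass a).
rewrite /= sgz. rewrite !rmorphB !rmorphM !rmorphXn /= !rmorph_nat rmorphN1 => h. by rewrite !expr2 h.
Qed.

Lemma sumZ_step a n (f : int -> rat) : sumZ a (n + 1) f = sumZ a n f + f (n + 1).
Proof.
rewrite /sumZ; case: ifP => h1; case: ifP => h2.
- have [k hk] : exists k : nat, (n - a + 1 : int) = Posz k.
    by exists (absz (n - a + 1)%R); rewrite gez0_abs //; lia.
  have -> : n + 1 - a + 1 = k.+1%:Z by lia.
  rewrite hk /= big_nat_recr //=. congr (_ + f _). lia.
- move/negbT: h2 => h2.
  have -> : a = n + 1 + 1 by lia.
  have -> : n + 1 - (n + 1 + 1) + 1 = 0 by ring.
  have -> : n + 1 + 1 - 1 - n = 1 by ring.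
  rewrite /= !big_nat1 big_geq // addr0. ring.
- move/negbT: h1 => h1. exfalso. lia.
- move/negbT: h1 => h1. move/negbT: h2 => h2.
  have [k hk] : exists k : nat, (a - 1 - (n + 1) : int) = Posz k.
    by exists (absz (a - 1 - (n + 1))%R); rewrite gez0_abs //; lia.
  have -> : (a - 1 - n : int) = Posz k.+1 by lia.
  rewrite hk /= big_nat_recl // addr0.
  have -> : \sum_(0 <= i < k) f (n + 1 + i.+1%:Z) = \sum_(0 <= j < k) f (n + 1 + 1 + j%:Z).
    by apply: eq_bigr => j _; congr f; lia.
  ring.
Qed.

Lemma sumZ_1 n (f : int -> rat) : sumZ 1 n f = sumZ 0 n f - f 0.
Proof.
elim/int_ind1: n => [|i h|i h].
- rewrite /sumZ /= big_geq // big_nat1. by rewrite subrr.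
- rewrite !sumZ_step h. ring.
- move: h; rewrite !sumZ_step. lra.
Qed.

Lemma core (x y a b e s t L2m F1 L1 F2 L2 : rat) : b != 0 -> L2m != 0 ->
  s = (y^+2-5*x^+2)/4 -> t = (b^+2-5*a^+2)/4 -> L2m = b^+2 - 2*t ->
  F1 = (x*b+a*y)/2 -> L1 = (y*b+5*x*a)/2 -> F2 = (F1*b+a*L1)/2 -> L2 = (L1*b+5*F1*a)/2 ->
  e*5*F1*F2*(b*L1*L2 + s*t*4*L2m)/(b*L2m) - t^+2*(-e*5*x*F1*(b*y*L1 + s*4*L2m)/(b*L2m))
   = e*L1^+4 - 16*e*s^+2*t^+2.
Proof. move=> hb hl -> ht hL -> -> -> ->. move: hl; rewrite hL ht => hl. have e4: b^+2*4 - 2*(b^+2-5*a^+2) = 4*(b^+2 - 2*((b^+2-5*a^+2)/4)) by field. field. by rewrite hb andbT e4 mulf_neq0. Qed.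

Lemma solve4 (p q r : rat) : p - 5 * q = 4 * r -> r = (p - 5 * q) / 4.
Proof. move=> ->. by field. Qed.
Lemma half (u v : rat) : 2 * u = v -> u = v / 2.
Proof. move=> <-. by field. Qed.
Lemma solveL (l b a t : rat) : 2 * l = b * b + 5 * a * a ->
  b ^+ 2 - 5 * a ^+ 2 = 4 * t -> l = b ^+ 2 - 2 * t.
Proof.
move=> h1 h2. have -> : l = (2 * l) / 2 by field; done.
rewrite h1. have -> : t = (b ^+ 2 - 5 * a ^+ 2) / 4 by rewrite h2; field.
rewrite !expr2; by field.
Qed.

Lemma castQ (z w : int) : z = w -> (z%:~R : rat) = w%:~R.
Proof. by move=> ->. Qed.

Definition fS (m k : int) : rat := (-1 : rat) ^ (k - 1) * ((L (m * k))%:~R) ^+ 4.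
Definition Rr (m n : int) : rat :=
  ((-1 : rat) ^ (n - 1) * 5 * (F (m * n))%:~R * (F (m * n + m))%:~R
      * ((L m)%:~R * (L (m * n))%:~R * (L (m * n + m))%:~R
         + (-1 : rat) ^ (n * m) * 4 * (L (2 * m))%:~R))
    / ((L m)%:~R * (L (2 * m))%:~R).

Lemma Dstep m n : fS m (n + 1) - 16 * (-1) ^ n = Rr m (n + 1) - Rr m n.
Proof.
rewrite /fS /Rr.
have e1 : m * (n + 1) = m * n + m by ring.
have e2 : n + 1 - 1 = n by ring.
rewrite e1 e2.
have sn1 : (-1:rat) ^ (n - 1) = - (-1) ^ n by rewrite sgD sgm1 mulrN1.
have snm : (-1:rat) ^ ((n + 1) * m) = (-1) ^ (n * m) * (-1) ^ m by rewrite mulrDl mul1r sgD.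
rewrite sn1 snm.
have [hF1 hL1] := addF (m * n) m.
have [hF2 hL2] := addF (m * n + m) m.
have [_ hLL] := addF m m.
have e3 : m + m = 2 * m by ring.
rewrite e3 in hLL.
move/castQ: hF1; rewrite !rmorphD !rmorphM !rmorph_nat => hF1.
move/castQ: hL1; rewrite !rmorphD !rmorphM !rmorph_nat => hL1.
move/castQ: hF2; rewrite !rmorphD !rmorphM !rmorph_nat => hF2.
move/castQ: hL2; rewrite !rmorphD !rmorphM !rmorph_nat => hL2.
move/castQ: hLL; rewrite !rmorphD !rmorphM !rmorph_nat => hLL.
have c1 := cassQ (m * n).
have c2 := cassQ m.
have hb : ((L m)%:~R : rat) != 0 by rewrite intr_eq0 L_neq0.
have hl : ((L (2 * m))%:~R : rat) != 0 by rewrite intr_eq0 L_neq0.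
have t2 : ((-1 : rat) ^ m) ^+ 2 = 1 by rewrite expr2 sgsq.
have s2 : ((-1 : rat) ^ (n * m)) ^+ 2 = 1 by rewrite expr2 sgsq.

have C := core ((F (m * n))%:~R) ((L (m * n))%:~R) ((F m)%:~R) ((L m)%:~R)
  ((-1) ^ n) ((-1) ^ (n * m)) ((-1) ^ m) ((L (2 * m))%:~R)
  ((F (m * n + m))%:~R) ((L (m * n + m))%:~R)
  ((F (m * n + m + m))%:~R) ((L (m * n + m + m))%:~R) hb hl.
rewrite t2 s2 mul1r !mulr1 in C.
symmetry; apply: C.
- rewrite [n * m]mulrC; exact: solve4 c1.
- exact: solve4 c2.
- exact: solveL hLL c2.
- exact: half hF1.
- exact: half hL1.
- exact: half hF2.
- exact: half hL2.
Qed.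

Lemma fS0 m : fS m 0 = -16.
Proof. rewrite /fS mulr0 L0 sub0r sgm1 mulN1r. by congr (- _). Qed.

Lemma Q m n : sumZ 0 n (fS m) + 8 * (1 + (-1) ^ n) = Rr m n.
Proof.
elim/int_ind1: n => [|i h|i h].
- rewrite /sumZ /= big_nat1 (_ : (0:int) + 0%Z = 0) // fS0 /Rr mulr0 F0 mulr0z mulr0 !mul0r expr0z. ring.
- move: (Dstep m i) h; rewrite sumZ_step sgD sg1. lra.
- move: (Dstep m i) h; rewrite sumZ_step sgD sg1. lra.
Qed.

Theorem theorem4 (m n : int) :
  sumZ (low n) n
    (fun k => (-1 : rat) ^ (k - 1) * ((L (m * k))%:~R) ^+ 4)
  = ((-1 : rat) ^ (n - 1) * 5 * (F (m * n))%:~R * (F (m * n + m))%:~R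
      * ((L m)%:~R * (L (m * n))%:~R * (L (m * n + m))%:~R
         + (-1 : rat) ^ (n * m) * 4 * (L (2 * m))%:~R))
    / ((L m)%:~R * (L (2 * m))%:~R).
Proof.
change (sumZ (low n) n (fS m) = Rr m n).
have := Q m n; rewrite sg_dvd /low.
case: ifP => _.
- rewrite sumZ_1 fS0. lra.
- lra.
Qed.
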